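(* Let $n\geq1$ and define the linear map $$\alpha:CF(n)\oplus CF(n)\oplus\mathrm{Ker}(\partial_n)\oplus\mathrm{Ker}(\partial_n)\to\mathrm{Im}(\partial_n)\oplus\mathrm{Ker}(\partial_n),$$ $$(u,v,w,t)\mapsto(\partial_n\eta_n u+\partial_n v,\ \partial_n\eta_n u+w+t+\eta_n w).$$ Then $\mathrm{Ker}(\alpha)$ is exactly the set of $(u,v,w,t)$ in the domain of $\alpha$ satisfying $$\partial_nv=w+t+\eta_n w,\qquad \partial_nu=w+\eta_n t+\eta_n w,\qquad \partial_nw=0.$$
   Context: $CF(n)$ is the $\mathbb{Z}_2$-vector space with basis the tuples $(\epsilon_1,\dots,\epsilon_{2n-1})\in\{\pm1\}^{2n-1}$. Linear maps $\eta_n,\tilde\partial_n:CF(n)\to CF(n)$ are given on basis elements by $\eta_n(\epsilon_1,\dots,\epsilon_{2n-1})=(-\epsilon_1,\dots,-\epsilon_{2n-1})$ and $\tilde\partial_n(\epsilon_1,\dots,\epsilon_{2n-1})=\sum_{i=1}^{2n-1}(\epsilon_1,\dots,-\epsilon_i,\dots,\epsilon_{2n-1})$, and $\partial_n=\tilde\partial_n+\eta_n$. *)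

(* Defs.v *)
From HB Require Import structures.
From mathcomp Require Import all_boot all_order all_algebra.
Set Implicit Arguments. Unset Strict Implicit. Unset Printing Implicit Defensive.
Import GRing.Theory.
Local Open Scope ring_scope.

(* Basis tuples (eps_1,...,eps_{2n-1}) in {+-1}^{2n-1}, encoded as functions
   'I_(2n-1) -> bool with true = +1 and false = -1. *)
Notation basisCF n := {ffun 'I_(2 * n - 1) -> bool}.

(* CF(n): the Z_2-vector space with basis basisCF n (finite, so all functions). *)
Notation CF n := {ffun basisCF n -> 'F_2}.

Definition bvec (n : nat) (e : basisCF n) : CF n := [ffun y => (y == e)%:R].

Definition negB (n : nat) (e : basisCF n) : basisCF n := [ffun j => ~~ e j].
Definition flipB (n : nat) (i : 'I_(2 * n - 1)) (e : basisCF n) : basisCF n :=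
  [ffun j => if j == i then ~~ e j else e j].

(* linear extensions of the maps given on basis elements:
   eta f = sum_e f(e) . bvec(-e),  dtilde f = sum_e f(e) . sum_i bvec(flip_i e),
   written coordinatewise since 'F_2 scalars act on CF n by pointwise product. *)
Definition eta (n : nat) (f : CF n) : CF n :=
  [ffun y => \sum_(e : basisCF n) f e * bvec (negB e) y].
Definition dtilde (n : nat) (f : CF n) : CF n :=
  [ffun y => \sum_(e : basisCF n) f e * \sum_(i < 2 * n - 1) bvec (flipB i e) y].
Definition bd (n : nat) (f : CF n) : CF n := dtilde f + eta f.

(* Main.v *)
Require Import Defs.
From mathcomp Require Import all_boot all_order all_algebra.
Import GRing.Theory.
Local Open Scope ring_scope.

Lemma negBK n : involutive (@negB n).
Proof. by move=> e; apply/ffunP=> j; rewrite !ffunE negbK. Qed.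

Lemma flipBK n i : involutive (@flipB n i).
Proof. by move=> e; apply/ffunP=> j; rewrite !ffunE; by case: eqP => // ->; rewrite negbK. Qed.

Lemma negB_flip n i (e : basisCF n) : negB (flipB i e) = flipB i (negB e).
Proof. by apply/ffunP=> j; rewrite !ffunE; case: eqP. Qed.

Lemma etaE n (f : CF n) y : eta f y = f (negB y).
Proof.
rewrite ffunE (bigD1 (negB y)) //= big1 ?addr0.
  by rewrite ffunE negBK eqxx mulr1.
move=> e He; rewrite ffunE; case: eqP => [Hy|]; last by rewrite mulr0.
by move: He; rewrite Hy negBK eqxx.
Qed.

Lemma dtildeE n (f : CF n) y : dtilde f y = \sum_(i < 2 * n - 1) f (flipB i y).
Proof.
rewrite ffunE.
under eq_bigr do rewrite mulr_sumr.
rewrite exchange_big /=; apply: eq_bigr => i _.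
rewrite (bigD1 (flipB i y)) //= big1 ?addr0.
  by rewrite ffunE flipBK eqxx mulr1.
move=> e He; rewrite ffunE; case: eqP => [Hy|]; last by rewrite mulr0.
by move: He; rewrite Hy flipBK eqxx.
Qed.

Lemma bdE n (f : CF n) y : bd f y = dtilde f y + eta f y.
Proof. by rewrite /bd [LHS]ffunE. Qed.

Lemma bd_eta n (f : CF n) : bd (eta f) = eta (bd f).
Proof.
apply/ffunP=> y; rewrite etaE !bdE !dtildeE !etaE negBK.
congr (_ + _); apply: eq_bigr => i _; by rewrite etaE negB_flip.
Qed.

Lemma etaK n (f : CF n) : eta (eta f) = f.
Proof. by apply/ffunP=> y; rewrite !etaE negBK. Qed.

Lemma etaD n (f g : CF n) : eta (f + g) = eta f + eta g.
Proof. by apply/ffunP=> y; rewrite etaE [LHS]ffunE [RHS]ffunE !etaE. Qed.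

Lemma F2xx (x : 'F_2) : x + x = 0.
Proof. by case: x => [[|[|[]]] Hx] //; apply: val_inj. Qed.

Lemma addxx n (f : CF n) : f + f = 0.
Proof. by apply/ffunP=> y; rewrite !ffunE F2xx. Qed.

Lemma eq_add n (a b : CF n) : (a + b = 0) <-> a = b.
Proof.
split=> [H|->]; last exact: addxx.
by rewrite -[a]addr0 -(addxx _ b) addrA H add0r.
Qed.

Theorem lemma4p4 (n : nat) (hn : (1 <= n)%N) (u v w t : CF n) :
  bd w = 0 -> bd t = 0 ->
  ((bd (eta u) + bd v = 0 /\ bd (eta u) + w + t + eta w = 0) <->
   [/\ bd v = w + t + eta w, bd u = w + eta t + eta w & bd w = 0]).
Proof.
move=> Hw Ht; rewrite bd_eta.
have Hu : forall x : CF n, eta (bd u) = x <-> bd u = eta x.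
  by move=> x; split=> [<-|->]; rewrite etaK.
have E : forall x : CF n, eta (w + t + eta w) = w + eta t + eta w.
  by move=> x; rewrite !etaD etaK addrC [eta w + _]addrC addrA.
split.
- case=> /eq_add H1 H2'.
  have H2 : eta (bd u) = w + t + eta w by apply/eq_add; rewrite !addrA.
  split => //.
    by rewrite -H1 H2.
  by move/Hu: H2 => ->; rewrite E.
- case=> H1 H2 _; have H3 : eta (bd u) = w + t + eta w.
    by apply/Hu; rewrite H2 E.
  rewrite H3 H1; split; first exact: addxx.
  by have := addxx _ (w + t + eta w); rewrite !addrA.
Qed.
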